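(* Let $G\in\mathbb{G}_\pi$ have vertex set $V=\{v_1,\dots,v_n\}$ with $n>2$, and let $T=V\setminus\{v_1,v_2\}$. Then $\mathcal{R}(G;V\setminus\{v_1\},T)=\mathcal{R}(G;V\setminus\{v_2\},T)$.
   Context: Let $\mathbb{W}$ be the field of rational functions $p/q$ in a complex variable $\lambda$ ($p,q\in\mathbb{C}[\lambda]$, $q\ne0$); $\pi(p/q)=\deg p-\deg q$ (zero counts as $\pi\le 0$). A graph $G=(V,E,\omega)$ is a finite directed graph, edges $E$ (loops allowed, at most one edge $e_{ij}$ from $v_i$ to $v_j$), weights $\omega:E\to\mathbb{W}\setminus\{0\}$, $\omega(e_{ij})=0$ for non-edges, $M(G)_{ij}=\omega(e_{ij})$. $\mathbb{G}_\pi$ is the set of graphs with $\pi(M(G)_{ij})\le0$ for all entries. $\bar S=V\setminus S$; $\ell(G)$ is $G$ without loops. A path is a sequence of distinct vertices $u_1,\dots,u_m$ ($m\ge2$) with edges $u_k\to u_{k+1}$; a cycle is the same with $u_1=u_m$, $u_1,\dots,u_{m-1}$ distinct; $u_2,\dots,u_{m-1}$ are interior. A nonempty $S\subseteq V$ is a structural set ($S\in st(G)$) if $\ell(G)|_{\bar S}$ has no cycles and $\omega(e_{ii})\ne\lambda$ for $v_i\in\bar S$. For $v_i,v_j\in S$, $\mathcal{B}_{ij}(G;S)$ = paths or cycles from $v_i$ to $v_j$ with no interior vertex in $S$; $\mathcal{P}_\omega(u_1,\dots,u_m)=\omega(u_1u_2)\prod_{k=2}^{m-1}\frac{\omega(u_ku_{k+1})}{\lambda-\omega(u_ku_k)}$;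 $\mathcal{R}_S(G)$ is the graph on $S$ with an edge $v_i\to v_j$ iff $\mathcal{B}_{ij}(G;S)\ne\emptyset$, of weight $\sum_{\beta\in\mathcal{B}_{ij}(G;S)}\mathcal{P}_\omega(\beta)$. For $S_2\subseteq S_1\subseteq V$ with $S_1\in st(G)$ and $S_2\in st(\mathcal{R}_{S_1}(G))$, $\mathcal{R}(G;S_1,S_2)=\mathcal{R}_{S_2}(\mathcal{R}_{S_1}(G))$. *)

(* Defs.v *)
From Stdlib Require Import Reals.
From HB Require Import structures.
From mathcomp Require Import all_boot all_order all_algebra.
From mathcomp Require Import complex.
From mathcomp Require Import Rstruct.
Set Implicit Arguments. Unset Strict Implicit. Unset Printing Implicit Defensive.
Import GRing.Theory Num.Theory.
Local Open Scope ring_scope.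

Definition Cx : numClosedFieldType := (Rdefinitions.R)[i].

Definition W : fieldType := {fraction {poly Cx}}.

Definition polyW (p : {poly Cx}) : W := @FracField.tofrac {poly Cx} p.
Local Notation "x %:F" := (polyW x).

Definition lam : W := ('X : {poly Cx})%:F.

(* pi(x) <= 0 : x = p/q with deg p <= deg q (size = deg + 1, size 0 = 0) *)
Definition piLe0 (x : W) : Prop :=
  exists p q : {poly Cx}, [/\ q != 0, x = p%:F / q%:F & (size p <= size q)%N].

(* A weighted directed graph whose vertices form a subset gV of 'I_n.
   gE is the edge set (pairs (i,j) = edge v_i -> v_j), gw the weight matrix
   (gw i j = omega(e_ij), which is 0 for non-edges). *)
Record graph (n : nat) := Graph {
  gV : {set 'I_n};
  gE : {set 'I_n * 'I_n};
  gw : 'M[W]_n }.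

Definition graph_of_mx n (M : 'M[W]_n) : graph n :=
  Graph [set: 'I_n] [set ij | M ij.1 ij.2 != 0] M.

Definition in_Gpi n (G : graph n) : Prop := forall i j, piLe0 (gw G i j).

(* P_omega(u_1,...,u_m) for the path u :: s ++ [:: j]:
   omega(u1 u2) * prod_{k=2}^{m-1} omega(u_k u_{k+1}) / (lambda - omega(u_k u_k)) *)
Fixpoint Pw n (w : 'M[W]_n) (u : 'I_n) (s : seq 'I_n) (j : 'I_n) : W :=
  match s with
  | [::] => w u j
  | x :: s' => w u x * (Pw w x s' j / (lam - w x x))
  end.

(* B_ij(G;S): the interior sequence t of a path or cycle i, t, j of G
   (edges of G, interior vertices distinct, in V \ S).  Since i, j are in S,
   distinctness from the endpoints is automatic. *)
Definition inB n (G : graph n) (S : {set 'I_n}) (i j : 'I_n) (t : seq 'I_n) : bool :=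
  [&& uniq t, all (fun x => x \in gV G :\: S) t &
      path (fun a b => (a, b) \in gE G) i (rcons t j)].

(* R_S(G) : graph on S; the interiors have length < n, enumerated as tuples *)
Definition redE n (G : graph n) (S : {set 'I_n}) : {set 'I_n * 'I_n} :=
  [set ij | [&& ij.1 \in S, ij.2 \in S &
     [exists k : 'I_n.+1, exists t : k.-tuple 'I_n, inB G S ij.1 ij.2 t]]].

Definition redw n (G : graph n) (S : {set 'I_n}) : 'M[W]_n :=
  \matrix_(i, j) (if (i \in S) && (j \in S) then
     \sum_(k < n.+1) \sum_(t : k.-tuple 'I_n | inB G S i j t) Pw (gw G) i t j
   else 0).

Definition red n (G : graph n) (S : {set 'I_n}) : graph n :=
  Graph S (redE G S) (redw G S).

Definition structural n (G : graph n) (S : {set 'I_n}) : Prop :=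
  [/\ S != set0, S \subset gV G,
      ~ (exists (u : 'I_n) (s : seq 'I_n),
           [/\ u \in gV G :\: S, uniq (u :: s), all (fun x => x \in gV G :\: S) s &
               path (fun a b => (a != b) && ((a, b) \in gE G)) u (rcons s u)])
    & forall i, i \in gV G :\: S -> gw G i i != lam].

Definition red2 n (G : graph n) (S1 S2 : {set 'I_n}) : graph n :=
  red (red G S1) S2.

(* Main.v *)
Require Import Defs.
From mathcomp Require Import all_boot all_order all_algebra.
From mathcomp Require Import fraction ring.
Set Implicit Arguments. Unset Strict Implicit. Unset Printing Implicit Defensive.
Import GRing.Theory.
Local Open Scope ring_scope.

Lemma polyW_eq0 p : (polyW p == 0) = (p == 0).
Proof. exact: tofrac_eq0. Qed.
Lemma polyWD p q : polyW (p + q) = polyW p + polyW q.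
Proof. exact: tofracD. Qed.
Lemma polyWM p q : polyW (p * q) = polyW p * polyW q.
Proof. exact: tofracM. Qed.
Lemma polyWB p q : polyW (p - q) = polyW p - polyW q.
Proof. exact: tofracB. Qed.

Lemma fadd (F : fieldType) (a b c d : F) : b != 0 -> d != 0 ->
  a / b + c / d = (a * d + c * b) / (b * d).
Proof. move=> hb hd. field. by rewrite hb hd. Qed.
Lemma fmul (F : fieldType) (a b c d : F) : b != 0 -> d != 0 ->
  (a / b) * (c / d) = (a * c) / (b * d).
Proof. move=> hb hd. field. by rewrite hb hd. Qed.
Lemma fsub (F : fieldType) (l a b : F) : b != 0 ->
  l - a / b = (l * b - a) / b.
Proof. move=> hb. field. by rewrite hb. Qed.
Lemma finv (F : fieldType) (a b : F) : (a / b)^-1 = b / a.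
Proof. by rewrite invfM invrK mulrC. Qed.

Lemma piLe0_add x y : piLe0 x -> piLe0 y -> piLe0 (x + y).
Proof.
move=> [p1 [q1 [nq1 -> s1]]] [p2 [q2 [nq2 -> s2]]].
exists (p1 * q2 + p2 * q1), (q1 * q2); split.
- by rewrite mulf_neq0.
- by rewrite fadd ?polyW_eq0 // polyWD !polyWM.
- rewrite (size_mul nq1 nq2); apply: leq_trans (size_polyD _ _) _.
  rewrite geq_max; apply/andP; split; apply: leq_trans (size_polyMleq _ _) _.
  + by rewrite -!subn1 leq_sub2r // leq_add2r.
  + by rewrite -!subn1 leq_sub2r // addnC leq_add2l.
Qed.

Lemma piLe0_mul x y : piLe0 x -> piLe0 y -> piLe0 (x * y).
Proof.
move=> [p1 [q1 [nq1 -> s1]]] [p2 [q2 [nq2 -> s2]]].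
exists (p1 * p2), (q1 * q2); split.
- by rewrite mulf_neq0.
- by rewrite fmul ?polyW_eq0 // !polyWM.
- rewrite (size_mul nq1 nq2); apply: leq_trans (size_polyMleq _ _) _.
  by rewrite -!subn1 leq_sub2r // leq_add.
Qed.

Lemma piLe0_lam u : piLe0 u -> lam - u != 0 /\ piLe0 (lam - u)^-1.
Proof.
move=> [p [q [nq -> s]]].
have hq : polyW q != 0 by rewrite polyW_eq0.
have sz : size ('X * q - p) = (size q).+1.
  have h1 : size ('X * q) = (size q).+1 by rewrite mulrC size_mulX.
  by rewrite size_polyDl h1 // size_polyN ltnS.
have nz : 'X * q - p != 0 by rewrite -size_poly_eq0 sz.
have e : lam - polyW p / polyW q = polyW ('X * q - p) / polyW q.
  by rewrite fsub // polyWB polyWM.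
rewrite e; split.
  by rewrite mulf_neq0 ?invr_eq0 ?polyW_eq0.
exists q, ('X * q - p); split.
- exact: nz.
- by rewrite finv.
- by rewrite sz.
Qed.


Lemma inB_single (n : nat) (G : graph n) (S : {set 'I_n}) (x : 'I_n) (Hx : gV G :\: S = [set x]) i j (t : seq 'I_n) : inB G S i j t -> t = [::] \/ t = [:: x].
Proof.
case/and3P; rewrite Hx.
case: t => [|b [|c r]] u a _; first by left.
- by right; move: a => /= /andP[]; rewrite inE => /eqP ->.
- move: a u => /= /and3P[]; rewrite !inE => /eqP -> /eqP -> _.
  by rewrite eqxx.
Qed.

Lemma inB0 (n : nat) (G : graph n) (S : {set 'I_n}) i j : inB G S i j [::] = ((i, j) \in gE G).
Proof. by rewrite /inB /= andbT. Qed.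

Lemma inB1 (n : nat) (G : graph n) (S : {set 'I_n}) (x : 'I_n) (Hx : gV G :\: S = [set x]) i j : inB G S i j [:: x] = ((i, x) \in gE G) && ((x, j) \in gE G).
Proof. by rewrite /inB /= Hx inE eqxx /= andbT. Qed.

Lemma nocycle (n : nat) (G : graph n) (S : {set 'I_n}) (x : 'I_n) (Hx : gV G :\: S = [set x]) (E : {set 'I_n * 'I_n}) :
  ~ (exists (u : 'I_n) (s : seq 'I_n),
           [/\ u \in gV G :\: S, uniq (u :: s), all (fun x => x \in gV G :\: S) s &
               path (fun a b => (a != b) && ((a, b) \in E)) u (rcons s u)]).
Proof.
move=> [u [s [hu un al p]]]; move: hu; rewrite Hx inE => /eqP hu; subst u.
case: s un al p => [|a r] /=; first by rewrite eqxx.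
move=> un /andP[]; rewrite Hx inE => /eqP ha; subst a.
by move: un; rewrite inE eqxx.
Qed.

Lemma sum_tuple_seq n k (P : seq 'I_n -> bool) (F : seq 'I_n -> W) (s : seq 'I_n) :
  size s = k -> (forall t : seq 'I_n, size t = k -> P t -> t = s) ->
  \sum_(t : k.-tuple 'I_n | P t) F t = if P s then F s else 0.
Proof.
move=> <- hP; case: ifP => Ps.
- rewrite (bigD1 (in_tuple s)) /=; last by [].
  rewrite big1 ?addr0 // => t /andP[Pt ne].
  move: ne; have -> : t = in_tuple s by apply: val_inj; apply: hP => //; exact: size_tuple.
  by rewrite eqxx.
- apply: big1 => t Pt; move: (hP _ (size_tuple t) Pt) => e; by rewrite -e Pt in Ps.
Qed.

Lemma redw_single n (G : graph n) S x i j : gV G :\: S = [set x] ->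
  (0 < n)%N -> i \in S -> j \in S ->
  redw G S i j = (if (i, j) \in gE G then gw G i j else 0) +
    (if ((i, x) \in gE G) && ((x, j) \in gE G) then
       gw G i x * (gw G x j / (lam - gw G x x)) else 0).
Proof.
move=> Hx n0 hi hj; rewrite /redw mxE hi hj /=.
case: n G S x i j Hx n0 hi hj => // m G S x i j Hx _ hi hj.
rewrite big_ord_recl big_ord_recl [X in _ + (_ + X)]big1 ?addr0.
- rewrite (@sum_tuple_seq _ 0 (inB G S i j) (fun t => Pw (gw G) i t j) [::]) //; last first.
    by move=> t st /(inB_single Hx) [] e; subst t.
  rewrite (@sum_tuple_seq _ 1 (inB G S i j) (fun t => Pw (gw G) i t j) [:: x]) //; last first.
    by move=> t st /(inB_single Hx) [] e; subst t.
  by rewrite inB0 (inB1 Hx).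
- move=> k _; apply: big1 => t ht; exfalso.
  have := size_tuple t; case: (inB_single Hx ht) => -> //.
Qed.

Lemma redw_nonedge n (G : graph n) S i j : (i, j) \notin redE G S -> redw G S i j = 0.
Proof.
rewrite inE /= => H; rewrite /redw mxE.
case: ifP => // /andP[hi hj]; rewrite hi hj /= in H.
apply: big1 => k _; apply: big1 => t ht; exfalso.
apply: (negP H); apply/existsP; exists k; apply/existsP; exists t; exact: ht.
Qed.

Lemma redE_single n (G : graph n) S x i j : gV G :\: S = [set x] -> (0 < n)%N ->
  ((i, j) \in redE G S) =
  [&& i \in S, j \in S & ((i, j) \in gE G) || (((i, x) \in gE G) && ((x, j) \in gE G))].
Proof.
move=> Hx; case: n G S x i j Hx => // m G S x i j Hx _.
rewrite inE /=; congr [&& _, _ & _].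
rewrite -(inB0 G S i j) -(inB1 Hx i j).
apply/idP/idP.
- case/existsP => k /existsP [t ht]; case: (inB_single Hx ht) => e; rewrite e in ht.
  + by rewrite ht.
  + by rewrite ht orbT.
- case/orP => h; apply/existsP.
  + exists ord0; apply/existsP; exists [tuple]; exact: h.
  + exists (Ordinal (isT : (1 < m.+2)%N)); apply/existsP; exists [tuple x]; exact: h.
Qed.

Lemma if_simpl n (E : 'I_n -> 'I_n -> bool) (w : 'I_n -> 'I_n -> W) (d : W) x i j :
  (forall a b, ~~ E a b -> w a b = 0) ->
  (if E i j then w i j else 0) + (if E i x && E x j then w i x * (w x j / d) else 0)
  = w i j + w i x * (w x j / d).
Proof.
move=> H.
have -> : (if E i j then w i j else 0) = w i j.
  by case: (boolP (E i j)) => h; last rewrite (H _ _ h).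
congr (_ + _).
case: (boolP (E i x)) => h1 /=; last by rewrite (H _ _ h1) mul0r.
case: (boolP (E x j)) => h2 /=; last by rewrite (H _ _ h2) mul0r mulr0.
by [].
Qed.
Lemma key (F : fieldType) (l aij aix axj aiy ayj axx ayy axy ayx : F) :
  l - axx != 0 -> l - ayy != 0 ->
  l - (ayy + ayx * (axy / (l - axx))) != 0 ->
  l - (axx + axy * (ayx / (l - ayy))) != 0 ->
  (aij + aix * (axj / (l - axx))) +
  (aiy + aix * (axy / (l - axx))) *
  ((ayj + ayx * (axj / (l - axx))) / (l - (ayy + ayx * (axy / (l - axx)))))
  =
  (aij + aiy * (ayj / (l - ayy))) +
  (aix + aiy * (ayx / (l - ayy))) *
  ((axj + axy * (ayj / (l - ayy))) / (l - (axx + axy * (ayx / (l - ayy))))).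
Proof.
move=> hx hy h1 h2.
set dx := l - axx in hx h1 *. set dy := l - ayy in hy h2 *.
have e1 : l - (ayy + ayx * (axy / dx)) = (dx * dy - ayx * axy) / dx.
  rewrite /dy; field; exact: hx.
have e2 : l - (axx + axy * (ayx / dy)) = (dx * dy - ayx * axy) / dy.
  rewrite /dx; field; exact: hy.
have hD : dx * dy - ayx * axy != 0.
  apply: contraNneq h1 => e; rewrite e1 e mul0r; exact: eqxx.
rewrite e1 e2; field.
by rewrite hx hy hD.
Qed.

Definition Rx n (M : 'M[W]_n) x a b := M a b + M a x * (M x b / (lam - M x x)).
Definition Fx n (M : 'M[W]_n) x y i j :=
  Rx M x i j + Rx M x i y * (Rx M x y j / (lam - Rx M x y y)).
Definition ex n (M : 'M[W]_n) x a b := (M a b != 0) || ((M a x != 0) && (M x b != 0)).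
Definition Ex n (M : 'M[W]_n) x y i j := ex M x i j || (ex M x i y && ex M x y j).

Lemma piRx n (M : 'M[W]_n) x a b : (forall i j, piLe0 (M i j)) -> piLe0 (Rx M x a b).
Proof.
move=> hp; rewrite /Rx; apply: piLe0_add => //; apply: piLe0_mul => //.
apply: piLe0_mul => //; exact: (piLe0_lam (hp x x)).2.
Qed.

Lemma neq_lam u : piLe0 u -> u != lam.
Proof.
move=> /piLe0_lam [h _]; apply: contraNneq h => ->; by rewrite subrr.
Qed.

Lemma half n (M : 'M[W]_n) x y (T : {set 'I_n}) :
  (2 < n)%N -> x != y -> (forall i j, piLe0 (M i j)) ->
  T = [set: 'I_n] :\: [set x; y] ->
  [/\ structural (graph_of_mx M) ([set: 'I_n] :\ x),
      structural (red (graph_of_mx M) ([set: 'I_n] :\ x)) T,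
      forall i j, i \in T -> j \in T ->
        redw (red (graph_of_mx M) ([set: 'I_n] :\ x)) T i j = Fx M x y i j &
      forall i j, ((i, j) \in redE (red (graph_of_mx M) ([set: 'I_n] :\ x)) T) =
        [&& i \in T, j \in T & Ex M x y i j]].
Proof.
move=> hn hxy hp hT.
set G := graph_of_mx M; set S := [set: 'I_n] :\ x.
have n0 : (0 < n)%N by apply: leq_trans hn.
have hS : gV G :\: S = [set x].
  apply/setP => z; rewrite !inE; by case: (z == x).
have yS : y \in S by rewrite !inE eq_sym hxy.
have TS : forall z, z \in T -> z \in S.
  by move=> z; rewrite hT !inE negb_or => /andP[/andP[h _] _]; rewrite h.
have hTS : gV (red G S) :\: T = [set y].
  apply/setP => z; rewrite hT !inE /= !andbT negbK.
  case: (z =P y) => [->|_]; first by rewrite eq_sym hxy orbT.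
  by rewrite orbF; case: (z == x).
have Eg : forall a b, ((a, b) \in gE G) = (M a b != 0) by move=> a b; rewrite inE.
have nonG : forall a b, ~~ ((a, b) \in gE G) -> gw G a b = 0.
  by move=> a b; rewrite Eg negbK => /eqP.
have RS : forall a b, a \in S -> b \in S -> redw G S a b = Rx M x a b.
  move=> a b ha hb; rewrite (redw_single hS n0 ha hb).
  exact: (@if_simpl _ (fun a b => (a, b) \in gE G) (gw G)).
have ES : forall a b, a \in S -> b \in S -> ((a, b) \in redE G S) = ex M x a b.
  by move=> a b ha hb; rewrite (redE_single _ _ hS n0) ha hb /= !Eg.
have Tne : T != set0.
  apply/negP => /eqP e; move: hn; rewrite ltnNge => /negP; apply.
  have : [set: 'I_n] \subset [set x; y] by rewrite -setD_eq0 -hT e.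
  move/subset_leq_card; rewrite cardsT card_ord cards2 hxy; exact.
split.
- split.
  + by apply/set0Pn; exists y.
  + exact: subsetT.
  + exact: nocycle hS _.
  + move=> i; rewrite hS inE => /eqP ->; exact: neq_lam.
- split.
  + exact: Tne.
  + by apply/subsetP.
  + exact: nocycle hTS _.
  + move=> i; rewrite hTS inE => /eqP ->; rewrite /= RS //; exact/neq_lam/piRx.
- move=> i j hi hj.
  rewrite (redw_single hTS n0 hi hj) (@if_simpl _ (fun a b => (a, b) \in gE (red G S)) (gw (red G S))).
    by rewrite /= /Fx !RS // ?(TS _ hi) ?(TS _ hj).
  move=> a b /= h; exact: redw_nonedge.
- move=> i j; rewrite (redE_single _ _ hTS n0) /=.
  case: (boolP (i \in T)) => hi //=; case: (boolP (j \in T)) => hj //=.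
  by rewrite !ES // ?(TS _ hi) ?(TS _ hj).
Qed.

Lemma bool9 (p q c d e f g h k : bool) :
  [&& p, q & (c || d && e) || ((f || d && h) && (g || k && e))] =
  [&& p, q & (c || f && g) || ((d || f && k) && (e || h && g))].
Proof. by case: p; case: q; case: c; case: d; case: e; case: f; case: g; case: h; case: k. Qed.

Theorem lemma4 (n : nat) (M : 'M[W]_n) (v1 v2 : 'I_n) :
  (2 < n)%N -> v1 != v2 -> in_Gpi (graph_of_mx M) ->
  let G := graph_of_mx M in
  let S1 := [set: 'I_n] :\ v1 in
  let S2 := [set: 'I_n] :\ v2 in
  let T := [set: 'I_n] :\: [set v1; v2] in
  [/\ structural G S1, structural (red G S1) T,
      structural G S2, structural (red G S2) T &
      red2 G S1 T = red2 G S2 T].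
Proof.
move=> hn hxy hp G S1 S2 T.
have hp' : forall i j, piLe0 (M i j) := hp.
have [a1 b1 c1 d1] := @half n M v1 v2 T hn hxy hp' erefl.
have hyx : v2 != v1 by rewrite eq_sym.
have eT : T = [set: 'I_n] :\: [set v2; v1] by rewrite /T setUC.
have [a2 b2 c2 d2] := @half n M v2 v1 T hn hyx hp' eT.
split; [exact: a1 | exact: b1 | exact: a2 | exact: b2 | ].
have redeq : forall G1 G2 : graph n, redE G1 T = redE G2 T -> redw G1 T = redw G2 T ->
  red G1 T = red G2 T by move=> G1 G2 e w; rewrite /red e w.
rewrite /red2; apply: redeq.
- apply/setP => -[i j]; 
  rewrite [LHS]d1 [RHS]d2.
  rewrite /Ex /ex.
  exact: bool9.
- apply/matrixP => i j.
  
  case: (boolP (i \in T)) => hi; last by rewrite !mxE (negbTE hi).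
  case: (boolP (j \in T)) => hj; last by rewrite !mxE (negbTE hj) andbF.
  rewrite (c1 _ _ hi hj) (c2 _ _ hi hj) /Fx /Rx.
  have [h1 _] := piLe0_lam (hp' v1 v1).
  have [h2 _] := piLe0_lam (hp' v2 v2).
  have [h3 _] := piLe0_lam (piRx v1 v2 v2 hp').
  have [h4 _] := piLe0_lam (piRx v2 v1 v1 hp').
  exact: key h1 h2 h3 h4.
Qed.
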